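(* Let $K=\{x\in\mathbb R^n: g_1(x)=\dots=g_m(x)=0,\ p_1(x)\ge0,\dots,p_t(x)\ge0\}$ be nonempty, with $g_i,p_j$ real polynomials, and let $d\ge1$. (i) If $K$ is compact, then for $f\in\mathbb R[x]_{\le d}$: $\delta_K(f)>0\iff f\in\operatorname{int}P_d(K)$, and $\delta_K(f)=0\iff f\in\partial P_d(K)$. (ii) If $K^h$ is closed at $\infty$, then for $f\in\mathbb R[x]_{\le d}$: $\delta^h_K(f)>0\iff f\in\operatorname{int}P_d(K)$, and $\delta^h_K(f)=0\iff f\in\partial P_d(K)$.
   Context: $\mathbb R[x]_{\le d}$: real polynomials in $x=(x_1,\dots,x_n)$ of degree $\le d$, with Euclidean topology on coefficients. $P_d(K)=\{f\in\mathbb R[x]_{\le d}: f(x)\ge0\ \forall x\in K\}$. With $\tilde x=(x_0,\dots,x_n)$: $f^h(\tilde x)=x_0^df(x/x_0)$ for $f\in\mathbb R[x]_{\le d}$, and each $g_i^h$, $p_j^h$ is the homogenization of $g_i$, $p_j$ in its own degree ($q^h=x_0^{\deg q}q(x/x_0)$). $K^h=\{\tilde x\in\mathbb R^{n+1}: g_i^h(\tilde x)=0\ \forall i,\ p_j^h(\tilde x)\ge0\ \forall j\}$ (depending on the chosen defining polynomials); $K^h$ is closed at $\infty$ if $K^h\cap\{x_0\ge0\}$ equals the closure of $K^h\cap\{x_0>0\}$. $\delta_K(f)=\min_{x\in K}f(x)$ and $\delta^h_K(f)=\min\{f^h(\tilde x):\tilde x\in K^h,\ \|\tilde x\|_2=1,\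 x_0\ge0\}$. *)

(* Defs.v *)
From Stdlib Require Import Reals.
From HB Require Import structures.
From mathcomp Require Import all_boot.
Local Open Scope R_scope.

Set Implicit Arguments.
Unset Strict Implicit.
Unset Printing Implicit Defensive.

Definition mono (n D : nat) :=
  {a : {ffun 'I_n -> 'I_D.+1} | (\sum_(i < n) (a i : nat) <= D)%N}.

Definition deg_of (n D : nat) (a : mono n D) : nat := (\sum_(i < n) (val a i : nat))%N.

Definition monomial (n D : nat) (x : 'I_n -> R) (a : mono n D) : R :=
  \big[Rmult/1]_(i : 'I_n) (pow (x i) (val a i : nat)).

(* A polynomial of degree <= D is its coefficient vector (mono n D -> R);
   R[x]_{<=d} is thus identified with R^{mono n d}, with Euclidean topology. *)
Definition peval (n D : nat) (f : mono n D -> R) (x : 'I_n -> R) : R :=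
  \big[Rplus/0]_(a : mono n D) (f a * monomial x a).

(* Homogenization in degree e, evaluated at xt = (x_0, x_1, ..., x_n):
   sum_alpha f_alpha x_0^(e - |alpha|) x^alpha  (= x_0^e f(x/x_0)). *)
Definition hom_eval (n D : nat) (e : nat) (f : mono n D -> R) (xt : 'I_n.+1 -> R) : R :=
  \big[Rplus/0]_(a : mono n D)
     (f a * pow (xt ord0) (e - deg_of a) * monomial (fun i => xt (lift ord0 i)) a).

Record rpoly (n : nat) := RPoly { rbound : nat; rcoef : mono n rbound -> R }.

Definition rp_eval (n : nat) (q : rpoly n) (x : 'I_n -> R) : R := peval (@rcoef n q) x.

(* The actual degree of q (max |alpha| over nonzero coefficients; 0 for q = 0). *)
Definition rdeg (n : nat) (q : rpoly n) : nat :=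
  (\max_(a : mono n (rbound q) | if Req_EM_T (@rcoef n q a) 0 then false else true)
      deg_of a)%N.

Definition rp_hom (n : nat) (q : rpoly n) (xt : 'I_n.+1 -> R) : R :=
  hom_eval (rdeg q) (@rcoef n q) xt.

Definition Kset (n m t : nat) (g : 'I_m -> rpoly n) (p : 'I_t -> rpoly n)
  (x : 'I_n -> R) : Prop :=
  (forall i, rp_eval (g i) x = 0) /\ (forall j, (rp_eval (p j) x >= 0)).

Definition Khset (n m t : nat) (g : 'I_m -> rpoly n) (p : 'I_t -> rpoly n)
  (xt : 'I_n.+1 -> R) : Prop :=
  (forall i, rp_hom (g i) xt = 0) /\ (forall j, (rp_hom (p j) xt >= 0)).

Definition Pd (n m t d : nat) (g : 'I_m -> rpoly n) (p : 'I_t -> rpoly n)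
  (f : mono n d -> R) : Prop :=
  forall x, Kset g p x -> (peval f x >= 0).

Definition dist2 (T : finType) (u v : T -> R) : R :=
  \big[Rplus/0]_(i : T) (pow (u i - v i) 2).

Definition interiorR (T : finType) (S : (T -> R) -> Prop) (f : T -> R) : Prop :=
  exists eps, (eps > 0) /\ forall h, (dist2 h f < pow eps 2) -> S h.

Definition closureR (T : finType) (S : (T -> R) -> Prop) (f : T -> R) : Prop :=
  forall eps, (eps > 0) -> exists h, S h /\ (dist2 h f < pow eps 2).

Definition boundaryR (T : finType) (S : (T -> R) -> Prop) (f : T -> R) : Prop :=
  closureR S f /\ ~ interiorR S f.

Definition closed_set (T : finType) (S : (T -> R) -> Prop) : Prop :=
  forall x, closureR S x -> S x.

Definition bounded_set (T : finType) (S : (T -> R) -> Prop) : Prop :=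
  exists M, forall x, S x -> (dist2 x (fun _ => 0) <= M).

(* compactness in R^n (Heine-Borel: closed and bounded) *)
Definition compact_set (T : finType) (S : (T -> R) -> Prop) : Prop :=
  closed_set S /\ bounded_set S.

Definition is_min (A : Type) (S : A -> Prop) (F : A -> R) (mn : R) : Prop :=
  (exists x, S x /\ F x = mn) /\ (forall x, S x -> (mn <= F x)).

Definition closed_at_infty (n m t : nat) (g : 'I_m -> rpoly n) (p : 'I_t -> rpoly n)
  : Prop :=
  forall xt, (Khset g p xt /\ (xt ord0 >= 0)) <->
             closureR (fun y => Khset g p y /\ (y ord0 > 0)) xt.

(* Domain of delta^h: K^h ∩ unit sphere ∩ {x0 >= 0} *)
Definition Khsphere (n m t : nat) (g : 'I_m -> rpoly n) (p : 'I_t -> rpoly n)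
  (xt : 'I_n.+1 -> R) : Prop :=
  Khset g p xt /\ dist2 xt (fun _ => 0) = 1 /\ (xt ord0 >= 0).

(* Main.v *)
Set Warnings "-notation-overridden -redundant-canonical-projection".
Require Import Defs.
From Stdlib Require Import Reals Lra Lia Psatz ClassicalEpsilon Classical FunctionalExtensionality.
From HB Require Import structures.
From mathcomp Require Import all_boot.
Local Open Scope R_scope.

HB.instance Definition _ := Monoid.isComLaw.Build R 0 Rplus (fun x y z => esym (Rplus_assoc x y z)) Rplus_comm Rplus_0_l.
HB.instance Definition _ := Monoid.isComLaw.Build R 1 Rmult (fun x y z => esym (Rmult_assoc x y z)) Rmult_comm Rmult_1_l.

Lemma mychoice (A B : Type) (P : A -> B -> Prop) :
  (forall a, exists b, P a b) -> exists f : A -> B, forall a, P a (f a).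
Proof.
move=> H; exists (fun a => proj1_sig (constructive_indefinite_description _ (H a))).
move=> a; exact: (proj2_sig (constructive_indefinite_description _ (H a))).
Qed.

Lemma cv_const (c : R) : Un_cv (fun _ => c) c.
Proof. move=> e He; exists 0%nat => k _; rewrite /R_dist.
replace (c - c) with 0 by ring; rewrite Rabs_R0; lra. Qed.

Lemma cv_ext (u v : nat -> R) l : (forall k, u k = v k) -> Un_cv u l -> Un_cv v l.
Proof. move=> E H e He; case: (H e He) => N HN; exists N => k Hk; rewrite -E; exact: HN. Qed.

Lemma pow_cv (u : nat -> R) l e : Un_cv u l -> Un_cv (fun k => u k ^ e) (l ^ e).
Proof. move=> H; elim: e => [|e IH] /=; first exact: cv_const.
exact: CV_mult. Qed.

Lemma big_cv_sum (I : Type) (s : seq I) (P : pred I) (F : nat -> I -> R) (G : I -> R) :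
  (forall i, Un_cv (fun k => F k i) (G i)) ->
  Un_cv (fun k => \big[Rplus/0]_(i <- s | P i) F k i) (\big[Rplus/0]_(i <- s | P i) G i).
Proof.
move=> H; elim: s => [|i s IH].
- apply: (@cv_ext (fun _ => 0)); first by move=> k; rewrite big_nil.
  rewrite big_nil; exact: cv_const.
- rewrite big_cons; case Pi: (P i).
  + apply: (@cv_ext (fun k => F k i + \big[Rplus/0]_(j <- s | P j) F k j)).
      by move=> k; rewrite big_cons Pi.
    exact: CV_plus.
  + apply: (@cv_ext (fun k => \big[Rplus/0]_(j <- s | P j) F k j)) => //.
    by move=> k; rewrite big_cons Pi.
Qed.

Lemma big_cv_prod (I : Type) (s : seq I) (P : pred I) (F : nat -> I -> R) (G : I -> R) :
  (forall i, Un_cv (fun k => F k i) (G i)) ->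
  Un_cv (fun k => \big[Rmult/1]_(i <- s | P i) F k i) (\big[Rmult/1]_(i <- s | P i) G i).
Proof.
move=> H; elim: s => [|i s IH].
- apply: (@cv_ext (fun _ => 1)); first by move=> k; rewrite big_nil.
  rewrite big_nil; exact: cv_const.
- rewrite big_cons; case Pi: (P i).
  + apply: (@cv_ext (fun k => F k i * \big[Rmult/1]_(j <- s | P j) F k j)).
      by move=> k; rewrite big_cons Pi.
    exact: CV_mult.
  + apply: (@cv_ext (fun k => \big[Rmult/1]_(j <- s | P j) F k j)) => //.
    by move=> k; rewrite big_cons Pi.
Qed.

Lemma subseq_cv (u : nat -> R) l (psi : nat -> nat) :
  (forall k, (k <= psi k)%coq_nat) -> Un_cv u l -> Un_cv (fun k => u (psi k)) l.
Proof. move=> Hp H e He; case: (H e He) => N HN; exists N => k Hk; apply: HN.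
have := Hp k; lia. Qed.

Lemma inv_small eps : 0 < eps -> exists N, forall k, (N <= k)%coq_nat -> / (INR k + 1) < eps.
Proof.
move=> He; case: (archimed_cor1 eps He) => N [HN HN0]; exists N => k Hk.
apply: Rle_lt_trans HN; apply: Rinv_le_contravar; first by apply: lt_0_INR.
have := le_INR _ _ Hk; lra.
Qed.

Lemma inv_pos k : 0 < / (INR k + 1).
Proof. apply: Rinv_0_lt_compat; have := pos_INR k; lra. Qed.

Lemma cv_inv_small (u : nat -> R) l : (forall k, Rabs (u k - l) < / (INR k + 1)) -> Un_cv u l.
Proof. move=> H e He; case: (inv_small _ He) => N HN; exists N => k Hk.
rewrite /R_dist; apply: Rlt_trans (H k) _; apply: HN; lia. Qed.

Lemma abs_le a M : Rabs a <= M -> -M <= a <= M.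
Proof. rewrite /Rabs; case: Rcase_abs; lra. Qed.

Lemma bw1 (u : nat -> R) M : (forall k, Rabs (u k) <= M) ->
  exists phi : nat -> nat, exists l, (forall k, (k <= phi k)%coq_nat) /\ Un_cv (fun k => u (phi k)) l.
Proof.
move=> HM.
have [l Hl] := Bolzano_Weierstrass u (fun c => -M <= c <= M) (compact_P3 (-M) M)
   (fun k => abs_le _ _ (HM k)).
have H : forall Nk : nat * nat, exists p, (Nk.1 <= p)%coq_nat /\ Rabs (u p - l) < / (INR Nk.2 + 1).
  move=> [N k].
  have Hn : neighbourhood (fun y => Rabs (y - l) < / (INR k + 1)) l.
    by exists (mkposreal _ (inv_pos k)) => y; rewrite /disc.
  have [p [Hp Vp]] := Hl _ N Hn.
  by exists p.
have [sel Hsel] := mychoice _ _ _ H.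
pose phi := fix f k := match k with 0 => sel (0, 0)%nat | S k' => sel (S (f k'), S k') end.
exists phi, l; split.
- elim=> [|k IH] /=; first lia. have := (Hsel (S (phi k), S k)).1 => /=; lia.
- apply: cv_inv_small; case=> [|k]; [exact: (Hsel (0,0)%nat).2 | exact: (Hsel (S (phi k), S k)).2].
Qed.

Lemma bwT (T : finType) (y : nat -> T -> R) M : (forall k i, Rabs (y k i) <= M) ->
  exists psi : nat -> nat, exists x : T -> R,
    (forall k, (k <= psi k)%coq_nat) /\ forall i, Un_cv (fun k => y (psi k) i) (x i).
Proof.
move=> HM.
suff H : forall s : seq T, exists psi x, (forall k, (k <= psi k)%coq_nat) /\
    forall i, i \in s -> Un_cv (fun k => y (psi k) i) (x i).
  case: (H (enum T)) => psi [x [H1 H2]]; exists psi, x; split=> // i; apply: H2; by rewrite mem_enum.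
elim=> [|j s [psi [x [H1 H2]]]].
- exists id, (fun _ => 0); split => // k; lia.
- case: (@bw1 (fun k => y (psi k) j) M) => [k|phi [l [P1 P2]]]; first exact: HM.
  exists (fun k => psi (phi k)), (fun i => if i == j then l else x i); split.
  + move=> k; have := P1 k; have := H1 (phi k); lia.
  + move=> i; rewrite in_cons; case: eqP => [->|_] /=; first by move=> _; exact: P2.
    move/H2 => Hi; exact: (@subseq_cv (fun k => y (psi k) i)).
Qed.

Lemma big_nonneg (I : Type) (s : seq I) (P : pred I) (F : I -> R) :
  (forall i, 0 <= F i) -> 0 <= \big[Rplus/0]_(i <- s | P i) F i.
Proof. move=> H; apply: (big_ind (fun x => 0 <= x)) => //; [lra | move=> *; lra]. Qed.

Lemma dist2_nonneg (T : finType) (u v : T -> R) : 0 <= dist2 u v.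
Proof. apply: big_nonneg => i; apply: pow2_ge_0. Qed.

Lemma dist2_coord (T : finType) (u v : T -> R) i : (u i - v i) ^ 2 <= dist2 u v.
Proof. rewrite /dist2 (bigD1 i) //=; set r := (X in _ <= _ + X).
have : 0 <= r by apply: big_nonneg => j; apply: pow2_ge_0.
lra. Qed.

Lemma dist2_refl (T : finType) (u : T -> R) : dist2 u u = 0.
Proof. rewrite /dist2 big1 // => i _; ring. Qed.

Lemma sq_lt_abs a b : 0 < b -> a ^ 2 < b ^ 2 -> Rabs a < b.
Proof. move=> Hb H; rewrite /Rabs; case: Rcase_abs => _; nra. Qed.

Lemma abs_le_sq a : Rabs a <= 1 + a ^ 2.
Proof. rewrite /Rabs; case: Rcase_abs => _; nra. Qed.

Lemma dist2_cv (T : finType) (y : nat -> T -> R) (x : T -> R) :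
  (forall i, Un_cv (fun k => y k i) (x i)) -> Un_cv (fun k => dist2 (y k) x) 0.
Proof.
move=> H; rewrite -(dist2_refl _ x); apply: big_cv_sum => i.
apply: pow_cv; apply: CV_minus => //; exact: cv_const.
Qed.

Lemma cv_eventually (u : nat -> R) l e : Un_cv u l -> l < e -> exists k, u k < e.
Proof. move=> H Hl; case: (H (e - l)) => [|N HN]; first lra.
exists N; have := HN N (le_n _); rewrite /R_dist => /Rabs_def2; lra. Qed.

Lemma cv_eventually_gt (u : nat -> R) l e : Un_cv u l -> e < l -> exists k, e < u k.
Proof. move=> H Hl; case: (H (l - e)) => [|N HN]; first lra.
exists N; have := HN N (le_n _); rewrite /R_dist => /Rabs_def2; lra. Qed.

Lemma cv_ge0 (u : nat -> R) l : (forall k, 0 <= u k) -> Un_cv u l -> 0 <= l.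
Proof. move=> H Hc; apply: (@Rle_cv_lim (fun _ => 0) u 0 l) => //; exact: cv_const. Qed.

Lemma cv_le0 (u : nat -> R) l : (forall k, u k <= 0) -> Un_cv u l -> l <= 0.
Proof. move=> H Hc; apply: (@Rle_cv_lim u (fun _ => 0) l 0) => //; exact: cv_const. Qed.

Lemma cv_eq0 (u : nat -> R) l : (forall k, u k = 0) -> Un_cv u l -> l = 0.
Proof. move=> H Hc; apply: (UL_sequence u) => //; apply: (@cv_ext (fun _ => 0)) => // ; exact: cv_const. Qed.

Lemma closure_seq (T : finType) (S : (T -> R) -> Prop) (x : T -> R) :
  closureR S x -> exists y : nat -> T -> R, (forall k, S (y k)) /\ forall i, Un_cv (fun k => y k i) (x i).
Proof.
move=> H.
have H' : forall k : nat, exists h, S h /\ dist2 h x < (/ (INR k + 1)) ^ 2.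
  move=> k; apply: H; exact: inv_pos.
have [y Hy] := mychoice _ _ _ H'.
exists y; split=> [k|i]; first exact: (Hy k).1.
apply: cv_inv_small => k; apply: sq_lt_abs; first exact: inv_pos.
apply: Rle_lt_trans (Hy k).2; exact: dist2_coord.
Qed.

Lemma cv_closure (T : finType) (S : (T -> R) -> Prop) (y : nat -> T -> R) x :
  (forall k, S (y k)) -> (forall i, Un_cv (fun k => y k i) (x i)) -> closureR S x.
Proof.
move=> HS Hc e He; have [k Hk] := cv_eventually _ _ (e ^ 2) (dist2_cv _ _ _ Hc) (pow_lt _ 2 He).
by exists (y k).
Qed.

Lemma seqcompact (T : finType) (S : (T -> R) -> Prop) (y : nat -> T -> R) :
  compact_set S -> (forall k, S (y k)) ->
  exists psi x, (forall k, (k <= psi k)%coq_nat) /\ S x /\ forall i, Un_cv (fun k => y (psi k) i) (x i).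
Proof.
move=> [Hcl [M HM]] HS.
have Hb : forall k i, Rabs (y k i) <= 1 + M.
  move=> k i; have := abs_le_sq (y k i); have := dist2_coord _ (y k) (fun _ => 0) i.
  have := HM _ (HS k); rewrite Rminus_0_r; lra.
have [psi [x [H1 H2]]] := @bwT T y (1 + M) Hb.
exists psi, x; do 2!split => //.
apply: Hcl; exact: (cv_closure _ S (fun k => y (psi k)) x (fun k => HS (psi k)) H2).
Qed.

Arguments seqcompact [T S y].

Lemma nat_big A : exists N : nat, A < INR N.
Proof.
have Hp : 0 < / (Rabs A + 1) by apply: Rinv_0_lt_compat; have := Rabs_pos A; lra.
have [N [HN HN0]] := archimed_cor1 _ Hp; exists N.
have HI : 0 < INR N by apply: lt_0_INR.
suff : Rabs A + 1 < INR N by have := Rle_abs A; lra.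
apply: Rnot_le_lt => Hle; have := Rinv_le_contravar _ _ HI Hle; lra.
Qed.

Lemma evt (T : finType) (S : (T -> R) -> Prop) (F : (T -> R) -> R) :
  compact_set S -> (exists x, S x) ->
  (forall y x, (forall k, S (y k)) -> S x -> (forall i, Un_cv (fun k => y k i) (x i)) ->
     Un_cv (fun k => F (y k)) (F x)) ->
  exists mn, is_min S F mn.
Proof.
move=> Hc [x0 Hx0] Hcont.
have Hb : exists B, forall x, S x -> B <= F x.
  apply: NNPP => Hn.
  have H : forall k : nat, exists x, S x /\ F x < - INR k.
    move=> k; apply: NNPP => Hk; apply: Hn; exists (- INR k) => x Sx.
    apply: Rnot_lt_le => Hlt; apply: Hk; by exists x.
  have [y Hy] := mychoice _ _ _ H.
  have [psi [x [P1 [Sx P2]]]] := seqcompact Hc (fun k => (Hy k).1).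
  have Hcv := Hcont _ _ (fun k => (Hy (psi k)).1) Sx P2.
  have [N HN] := Hcv 1 Rlt_0_1.
  have [M HM] := nat_big (1 - F x).
  have HNk := HN (N + M)%coq_nat ltac:(lia).
  have := (Hy (psi (N + M)%coq_nat)).2.
  have := le_INR _ _ (P1 (N + M)%coq_nat); have := le_INR M (N + M)%coq_nat ltac:(lia).
  move: HNk; rewrite /R_dist => /Rabs_def2; lra.
have [B HB] := Hb.
pose E := fun r => exists x, S x /\ r = - F x.
have HbE : bound E by exists (- B) => r [x [Sx ->]]; have := HB x Sx; lra.
have [L [HL1 HL2]] := completeness E HbE (ex_intro _ (- F x0) (ex_intro _ x0 (conj Hx0 erefl))).
have Hlow : forall x, S x -> - L <= F x.
  move=> x Sx; have := HL1 (- F x) (ex_intro _ x (conj Sx erefl)); lra.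
have H : forall k : nat, exists x, S x /\ F x < - L + / (INR k + 1).
  move=> k; apply: NNPP => Hk.
  suff : L <= L - / (INR k + 1) by have := inv_pos k; lra.
  apply: HL2 => r [x [Sx ->]]; apply: Rnot_lt_le => Hlt; apply: Hk; exists x; split => //; lra.
have [y Hy] := mychoice _ _ _ H.
have [psi [x [P1 [Sx P2]]]] := seqcompact Hc (fun k => (Hy k).1).
have Hcv := Hcont _ _ (fun k => (Hy (psi k)).1) Sx P2.
exists (- L); split; last exact: Hlow.
exists x; split => //.
apply: Rle_antisym; last exact: Hlow.
apply: Rnot_lt_le => Hlt.
have [N HN] := Hcv ((F x + L) / 2) ltac:(lra).
have [M HM] := inv_small ((F x + L) / 2) ltac:(lra).
have HNk := HN (N + M)%coq_nat ltac:(lia).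
have := (Hy (psi (N + M)%coq_nat)).2.
have := HM (psi (N + M)%coq_nat) ltac:(have := P1 (N + M)%coq_nat; lia).
move: HNk; rewrite /R_dist => /Rabs_def2; lra.
Qed.

Lemma monomial_cv n D (y : nat -> 'I_n -> R) x (a : mono n D) :
  (forall i, Un_cv (fun k => y k i) (x i)) -> Un_cv (fun k => monomial (y k) a) (monomial x a).
Proof. move=> H; apply: big_cv_prod => i; exact: pow_cv. Qed.

Lemma peval_cv n D (h : nat -> mono n D -> R) f (y : nat -> 'I_n -> R) x :
  (forall a, Un_cv (fun k => h k a) (f a)) -> (forall i, Un_cv (fun k => y k i) (x i)) ->
  Un_cv (fun k => peval (h k) (y k)) (peval f x).
Proof. move=> Hh Hy; apply: big_cv_sum => a; apply: CV_mult => //; exact: monomial_cv. Qed.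

Lemma hom_eval_cv n D e (h : nat -> mono n D -> R) f (y : nat -> 'I_n.+1 -> R) x :
  (forall a, Un_cv (fun k => h k a) (f a)) -> (forall i, Un_cv (fun k => y k i) (x i)) ->
  Un_cv (fun k => hom_eval e (h k) (y k)) (hom_eval e f x).
Proof. move=> Hh Hy; apply: big_cv_sum => a; apply: CV_mult; first apply: CV_mult => //.
- exact: pow_cv.
- apply: (@monomial_cv _ _ (fun k i => y k (lift ord0 i))) => i; exact: Hy.
Qed.

Definition ext n (x : 'I_n -> R) (j : 'I_n.+1) : R :=
  match unlift ord0 j with Some i => x i | None => 1 end.
Arguments ext [n].

Lemma ext0 n (x : 'I_n -> R) : ext x ord0 = 1.
Proof. by rewrite /ext unlift_none. Qed.

Lemma extS n (x : 'I_n -> R) i : ext x (lift ord0 i) = x i.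
Proof. by rewrite /ext liftK. Qed.

Lemma hom_eval_ext n D e (f : mono n D -> R) x : hom_eval e f (ext x) = peval f x.
Proof.
rewrite /hom_eval /peval; apply: eq_bigr => a _; rewrite ext0 pow1 Rmult_1_r.
congr (_ * _); apply: eq_bigr => i _; by rewrite extS.
Qed.

Lemma big_scale_prod (I : Type) (s : seq I) (P : pred I) (c : R) (x : I -> R) (F : I -> nat) :
  \big[Rmult/1]_(i <- s | P i) (c * x i) ^ F i =
  c ^ (\sum_(i <- s | P i) F i)%N * \big[Rmult/1]_(i <- s | P i) x i ^ F i.
Proof.
elim: s => [|i s IH]; first by rewrite !big_nil /=; ring.
rewrite !big_cons; case: (P i) => //.
rewrite IH pow_add Rpow_mult_distr; ring.
Qed.

Lemma big_distr (I : Type) (s : seq I) (P : pred I) (c : R) (F : I -> R) :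
  c * \big[Rplus/0]_(i <- s | P i) F i = \big[Rplus/0]_(i <- s | P i) (c * F i).
Proof.
elim: s => [|i s IH]; first by rewrite !big_nil; ring.
rewrite !big_cons; case: (P i) => //; rewrite -IH; ring.
Qed.

Lemma monomial_scale n D (c : R) (x : 'I_n -> R) (a : mono n D) :
  monomial (fun i => c * x i) a = c ^ deg_of a * monomial x a.
Proof. exact: big_scale_prod. Qed.

Lemma hom_eval_scale n D e (f : mono n D -> R) c xt :
  (forall a, f a <> 0 -> (deg_of a <= e)%N) ->
  hom_eval e f (fun j => c * xt j) = c ^ e * hom_eval e f xt.
Proof.
move=> Hd; rewrite /hom_eval big_distr; apply: eq_bigr => a _.
rewrite monomial_scale.
case: (Req_dec (f a) 0) => [->|/Hd Ha]; first ring.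
rewrite Rpow_mult_distr.
have -> : c ^ e = c ^ (e - deg_of a) * c ^ deg_of a by rewrite -pow_add; have := subnK Ha; rewrite -plusE => ->.
change (deg_of (n:=n.+1.-1) (D:=D) a) with (deg_of (n:=n) (D:=D) a); ring.
Qed.

Lemma deg_le n D (a : mono n D) : (deg_of a <= D)%N.
Proof. exact: (valP a). Qed.

Lemma rdeg_ge n (q : rpoly n) a : @rcoef n q a <> 0 -> (deg_of a <= rdeg q)%N.
Proof.
move=> Ha; rewrite /rdeg; apply: (leq_bigmax_cond (F := fun a => deg_of a)).
by case: Req_EM_T.
Qed.

Lemma rp_hom_scale n (q : rpoly n) c xt :
  rp_hom q (fun j => c * xt j) = c ^ rdeg q * rp_hom q xt.
Proof. apply: hom_eval_scale => a; exact: rdeg_ge. Qed.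

Lemma Khset_scale n m t (g : 'I_m -> rpoly n) (p : 'I_t -> rpoly n) c xt :
  0 < c -> (Khset g p (fun j => c * xt j) <-> Khset g p xt).
Proof.
move=> Hc; rewrite /Khset.
have Hp : forall k, 0 < c ^ k by move=> k; apply: pow_lt.
split=> [[H1 H2]|[H1 H2]]; split.
- move=> i; have := H1 i; rewrite rp_hom_scale => E.
  have := Hp (rdeg (g i)); move: E; move: (rp_hom (g i) xt) => r; nra.
- move=> j; have := H2 j; rewrite rp_hom_scale => E.
  have := Hp (rdeg (p j)); move: E; move: (rp_hom (p j) xt) => r; nra.
- move=> i; rewrite rp_hom_scale H1; ring.
- move=> j; rewrite rp_hom_scale; have := H2 j; have := Hp (rdeg (p j)); move: (rp_hom (p j) xt) => r; nra.
Qed.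

Lemma rp_hom_ext n (q : rpoly n) x : rp_hom q (ext x) = rp_eval q x.
Proof. exact: hom_eval_ext. Qed.

Lemma Kset_ext n m t (g : 'I_m -> rpoly n) (p : 'I_t -> rpoly n) x :
  Kset g p x <-> Khset g p (ext x).
Proof.
rewrite /Kset /Khset; split => [[H1 H2]|[H1 H2]]; split => i; rewrite ?rp_hom_ext;
  [apply: H1 | apply: H2 | rewrite -rp_hom_ext; apply: H1 | rewrite -rp_hom_ext; apply: H2].
Qed.

Lemma decomp n (y : 'I_n.+1 -> R) : 0 < y ord0 ->
  y = (fun j => y ord0 * ext (fun i => y (lift ord0 i) / y ord0) j).
Proof.
move=> Hy; apply: functional_extensionality => j.
case: (unliftP ord0 j) => [i ->|->]; rewrite ?extS ?ext0; last ring.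
by field; lra.
Qed.

Lemma hom_scale_ext n d (f : mono n d -> R) c x :
  hom_eval d f (fun j => c * ext x j) = c ^ d * peval f x.
Proof. rewrite hom_eval_scale ?hom_eval_ext // => a _; exact: deg_le. Qed.

Lemma K_of_Kh n m t (g : 'I_m -> rpoly n) (p : 'I_t -> rpoly n) y :
  Khset g p y -> 0 < y ord0 ->
  Kset g p (fun i => y (lift ord0 i) / y ord0) /\
  forall d (f : mono n d -> R), hom_eval d f y = y ord0 ^ d * peval f (fun i => y (lift ord0 i) / y ord0).
Proof.
move=> Hk Hy; have E := @decomp _ y Hy; split.
- apply/Kset_ext; apply/(@Khset_scale _ _ _ g p _ _ Hy); by rewrite -E.
- move=> d f; by rewrite {1}E hom_scale_ext.
Qed.

Lemma dist2_scale (T : finType) c (u : T -> R) :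
  dist2 (fun j => c * u j) (fun _ => 0) = c ^ 2 * dist2 u (fun _ => 0).
Proof. rewrite /dist2 big_distr; apply: eq_bigr => i _; ring. Qed.

Lemma sphere_of_K n m t (g : 'I_m -> rpoly n) (p : 'I_t -> rpoly n) x :
  Kset g p x -> exists c, 0 < c /\ Khsphere g p (fun j => c * ext x j).
Proof.
move=> Hx; set D := dist2 (ext x) (fun _ => 0).
have HD : 1 <= D by have := dist2_coord _ (ext x) (fun _ => 0) ord0; rewrite ext0 /D; lra.
have Hs : 0 < sqrt D by apply: sqrt_lt_R0; lra.
exists (/ sqrt D); split; first exact: Rinv_0_lt_compat.
split; first by apply/(@Khset_scale _ _ _ g p _ _ (Rinv_0_lt_compat _ Hs)); apply/Kset_ext.
split; last by rewrite ext0; have := Rinv_0_lt_compat _ Hs; lra.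
rewrite dist2_scale -/D.
have := sqrt_sqrt D ltac:(lra); move: (sqrt D) Hs => s Hs Es.
rewrite -Es; field; lra.
Qed.

Definition delta n D (a1 : mono n D) (a : mono n D) : R := if a == a1 then 1 else 0.
Arguments delta [n D].

Lemma big_delta {n D} (a1 : mono n D) (G : mono n D -> R) :
  \big[Rplus/0]_(a : mono n D) (delta a1 a * G a) = G a1.
Proof.
rewrite (bigD1 a1) //= big1 /delta ?eqxx; first ring.
by move=> a /negbTE ->; ring.
Qed.

Lemma peval_lin n D (f : mono n D -> R) r a1 x :
  peval (fun a => f a + r * delta a1 a) x = peval f x + r * monomial x a1.
Proof.
rewrite /peval -(big_delta a1 (fun a => monomial x a)) big_distr -big_split /=.
apply: eq_bigr => a _; ring.
Qed.

Lemma hom_eval_lin n D e (f : mono n D -> R) r a1 xt :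
  hom_eval e (fun a => f a + r * delta a1 a) xt =
  hom_eval e f xt + r * (xt ord0 ^ (e - deg_of a1) * monomial (fun i => xt (lift ord0 i)) a1).
Proof.
rewrite /hom_eval -(big_delta a1 (fun a => xt ord0 ^ (e - deg_of a) * monomial (fun i => xt (lift ord0 i)) a)).
rewrite big_distr -big_split /=.
apply: eq_bigr => a _; ring.
Qed.

Lemma dist2_delta n D (f : mono n D -> R) r a1 :
  dist2 (fun a => f a + r * delta a1 a) f = r ^ 2.
Proof.
rewrite /dist2 -(big_delta a1 (fun _ => r ^ 2)).
apply: eq_bigr => a _; rewrite /delta; case: (a == a1); ring.
Qed.

Program Definition a0 n d : mono n d := exist _ [ffun _ => ord0] _.
Next Obligation. by rewrite big1 // => i _; rewrite ffunE. Qed.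

Lemma a0_deg n d : deg_of (a0 n d) = 0%N.
Proof. by rewrite /deg_of big1 // => i _; rewrite /= ffunE. Qed.

Lemma a0_mono n d (x : 'I_n -> R) : monomial x (a0 n d) = 1.
Proof. by rewrite /monomial big1 // => i _; rewrite /= ffunE. Qed.

Program Definition aj {n} d (j : 'I_n) : mono n d := exist _ [ffun i => if i == j then ord_max else ord0] _.
Next Obligation. by rewrite (bigD1 j) //= big1 ?ffunE ?eqxx ?addn0 // => i /negbTE Hi; rewrite ffunE Hi. Qed.

Lemma aj_deg n d (j : 'I_n) : deg_of (aj d j) = d :> nat.
Proof. by rewrite /deg_of (bigD1 j) //= big1 ?ffunE ?eqxx ?addn0 // => i /negbTE Hi; rewrite ffunE Hi. Qed.

Lemma aj_mono n d j (x : 'I_n -> R) : monomial x (aj d j) = x j ^ d.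
Proof.
rewrite /monomial (bigD1 j) //= big1 ?ffunE ?eqxx /=; first ring.
by move=> i /negbTE Hi; rewrite ffunE Hi.
Qed.

Arguments sphere_of_K [n m t g p x].
Arguments K_of_Kh [n m t g p y].
Arguments closure_seq [T S x].

Section Main.
Variables (n m t d : nat) (g : 'I_m -> rpoly n) (p : 'I_t -> rpoly n).

Lemma Pd_closed {f : mono n d -> R} : closureR (Pd g p) f -> Pd g p f.
Proof.
move=> /closure_seq [h [Hh Hc]] x Kx; apply: Rle_ge.
apply: (cv_ge0 (fun k => peval (h k) x)); first by move=> k; apply: Rge_le; exact: Hh.
apply: peval_cv => // i; exact: cv_const.
Qed.

Lemma interior_Pd {f : mono n d -> R} : interiorR (Pd g p) f -> Pd g p f.
Proof. move=> [e [He H]]; apply: H; rewrite dist2_refl; exact: pow_lt. Qed.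

Lemma final_part (f : mono n d -> R) mn :
  (Pd g p f <-> 0 <= mn) -> (mn > 0 <-> interiorR (Pd g p) f) ->
  (mn = 0 <-> boundaryR (Pd g p) f).
Proof.
move=> HA HB; split.
- move=> E; split.
  + move=> e He; exists f; split; first by apply/HA; lra.
    rewrite dist2_refl; exact: pow_lt.
  + move/HB; lra.
- move=> [Hc Hi]; have := (HA.1 (Pd_closed Hc)).
  have : ~ mn > 0 by move/HB.
  lra.
Qed.

Lemma not_interior_seq {f : mono n d -> R} : ~ interiorR (Pd g p) f ->
  exists h : nat -> mono n d -> R, exists x : nat -> 'I_n -> R,
   (forall k, Kset g p (x k) /\ peval (h k) (x k) < 0) /\ forall a, Un_cv (fun k => h k a) (f a).
Proof.
move=> Hn.
have H : forall k : nat, exists hx : (mono n d -> R) * ('I_n -> R),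
    dist2 hx.1 f < (/ (INR k + 1)) ^ 2 /\ Kset g p hx.2 /\ peval hx.1 hx.2 < 0.
  move=> k; apply: NNPP => Hk; apply: Hn; exists (/ (INR k + 1)); split; first exact: inv_pos.
  move=> h Hh x Kx; apply: Rnot_lt_ge => Hlt; apply: Hk; by exists (h, x).
have [hx Hhx] := mychoice _ _ _ H.
exists (fun k => (hx k).1), (fun k => (hx k).2); split.
- move=> k; exact: (Hhx k).2.
- move=> a; apply: cv_inv_small => k; apply: sq_lt_abs; first exact: inv_pos.
  apply: Rle_lt_trans (Hhx k).1; exact: dist2_coord.
Qed.

Lemma part1 : (exists x, Kset g p x) -> compact_set (Kset g p) ->
     forall f : mono n d -> R,
       exists mn, is_min (Kset g p) (peval f) mn /\
         ((mn > 0) <-> interiorR (Pd g p) f) /\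
         (mn = 0 <-> boundaryR (Pd g p) f).
Proof.
move=> Hne Hc f.
have [mn [[x0 [Kx0 E0]] Hmin]] : exists mn, is_min (Kset g p) (peval f) mn.
  apply: evt => // y x _ _ Hy; apply: peval_cv => // a; exact: cv_const.
have HA : Pd g p f <-> 0 <= mn.
  split; first by move=> H; rewrite -E0; apply: Rge_le; exact: H.
  move=> H x Kx; have := Hmin x Kx; lra.
have HB : mn > 0 <-> interiorR (Pd g p) f.
  split.
  - move=> Hpos; apply: NNPP => /not_interior_seq [h [x [Hx Hh]]].
    have [psi [xs [P1 [Kxs P2]]]] := seqcompact Hc (fun k => (Hx k).1).
    have Hcv : Un_cv (fun k => peval (h (psi k)) (x (psi k))) (peval f xs).
      apply: peval_cv => // a; exact: (@subseq_cv (fun k => h k a)).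
    have := cv_le0 _ _ (fun k => Rlt_le _ _ (Hx (psi k)).2) Hcv.
    have := Hmin xs Kxs; lra.
  - move=> Hi; have Hp := HA.1 (interior_Pd Hi).
    case: Hi => e [He Hi]; apply: Rnot_le_lt => Hle.
    have E : mn = 0 by lra.
    have := Hi (fun a => f a + (- (e / 2)) * delta (a0 n d) a).
    rewrite dist2_delta => /(_ ltac:(nra)) /(_ x0 Kx0).
    rewrite peval_lin a0_mono E0 E; lra.
exists mn; do 2!split => //; first by exists x0.
exact: final_part.
Qed.

Lemma dist2_cv2 (T : finType) (y : nat -> T -> R) (x v : T -> R) :
  (forall i, Un_cv (fun k => y k i) (x i)) -> Un_cv (fun k => dist2 (y k) v) (dist2 x v).
Proof.
move=> H; apply: big_cv_sum => i.
apply: pow_cv; apply: CV_minus => //; exact: cv_const.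
Qed.

Lemma sphere_compact : compact_set (Khsphere g p).
Proof.
split; last by exists 1 => x [_ [-> _]]; lra.
move=> z /closure_seq [y [Hy Hc]].
have Hcst : forall q : rpoly n, Un_cv (fun k => rp_hom q (y k)) (rp_hom q z).
  move=> q; apply: hom_eval_cv => // a; exact: cv_const.
split; [split|split].
- move=> i; apply: (cv_eq0 (fun k => rp_hom (g i) (y k))) => //.
  move=> k; exact: ((Hy k).1.1 i).
- move=> j; apply: Rle_ge; apply: (cv_ge0 (fun k => rp_hom (p j) (y k))) => //.
  move=> k; apply: Rge_le; exact: ((Hy k).1.2 j).
- apply: (UL_sequence (fun k => dist2 (y k) (fun _ => 0))); first exact: dist2_cv2.
  apply: (@cv_ext (fun _ => 1)); last exact: cv_const.
  by move=> k; rewrite (Hy k).2.1.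
- apply: Rle_ge; apply: (cv_ge0 (fun k => y k ord0)) => //.
  move=> k; apply: Rge_le; exact: (Hy k).2.2.
Qed.

Lemma nonzero_coord {z : 'I_n.+1 -> R} : dist2 z (fun _ => 0) = 1 -> exists j, z j <> 0.
Proof.
move=> H; apply: NNPP => Hn; move: H; rewrite /dist2 big1; first lra.
move=> j _; have : z j = 0 by apply: NNPP => Hj; apply: Hn; exists j.
by move=> ->; ring.
Qed.

Lemma part2 : (exists x, Kset g p x) -> closed_at_infty g p ->
     forall f : mono n d -> R,
       exists mn, is_min (Khsphere g p) (hom_eval d f) mn /\
         ((mn > 0) <-> interiorR (Pd g p) f) /\
         (mn = 0 <-> boundaryR (Pd g p) f).
Proof.
move=> [xe Kxe] Hci f.
have [mn [[z0 [Sz0 E0]] Hmin]] : exists mn, is_min (Khsphere g p) (hom_eval d f) mn.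
  apply: evt; first exact: sphere_compact.
  - have [c [_ Hc]] := sphere_of_K Kxe; by eexists; exact: Hc.
  - move=> y x _ _ Hy; apply: hom_eval_cv => // a; exact: cv_const.
have Hclos : forall z, Khsphere g p z -> closureR (fun y => Khset g p y /\ y ord0 > 0) z.
  move=> z [Kz [_ Hz0]]; apply/Hci; by split.
have HA : Pd g p f <-> 0 <= mn.
  split.
  - move=> H; rewrite -E0.
    have [y [Hy Hc]] := closure_seq (Hclos _ Sz0).
    apply: (cv_ge0 (fun k => hom_eval d f (y k))); last first.
      apply: hom_eval_cv => // a; exact: cv_const.
    move=> k; have [Kx Eh] := K_of_Kh (Hy k).1 (Hy k).2.
    rewrite Eh; apply: Rmult_le_pos; first by apply: pow_le; have := (Hy k).2; lra.
    apply: Rge_le; exact: H.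
  - move=> H x Kx; have [c [Hc Sz]] := sphere_of_K Kx.
    have := Hmin _ Sz; rewrite hom_scale_ext => Hle.
    have Hcd := pow_lt c d Hc; apply: Rle_ge.
    move: Hle; move: (peval f x) => r Hle; nra.
have HB : mn > 0 <-> interiorR (Pd g p) f.
  split.
  - move=> Hpos; apply: NNPP => /not_interior_seq [h [x [Hx Hh]]].
    have [c Hc] := mychoice _ _ _ (fun k => sphere_of_K (Hx k).1).
    pose z := fun k j => c k * ext (x k) j.
    have [psi [zs [P1 [Szs P2]]]] := seqcompact sphere_compact (fun k => (Hc k).2 : Khsphere g p (z k)).
    have Hcv : Un_cv (fun k => hom_eval d (h (psi k)) (z (psi k))) (hom_eval d f zs).
      apply: hom_eval_cv => // a; exact: (@subseq_cv (fun k => h k a)).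
    have Hneg : forall k, hom_eval d (h (psi k)) (z (psi k)) <= 0.
      move=> k; rewrite /z hom_scale_ext.
      have := pow_lt _ d (Hc (psi k)).1; have := (Hx (psi k)).2.
      move: (peval _ _) (c (psi k) ^ d) => r s; nra.
    have := cv_le0 _ _ Hneg Hcv.
    have := Hmin zs Szs; lra.
  - move=> Hi; have Hp := HA.1 (interior_Pd Hi).
    case: Hi => e [He Hi]; apply: Rnot_le_lt => Hle.
    have E : mn = 0 by lra.
    have [a1 [s [Hs Es]]] : exists a1 : mono n d, exists s, s <> 0 /\
        s = z0 ord0 ^ (d - deg_of a1) * monomial (fun i => z0 (lift ord0 i)) a1.
      have [j Hj] := nonzero_coord Sz0.2.1.
      case: (unliftP ord0 j) Hj => [i ->|->] Hj.
      + exists (aj d i), (z0 (lift ord0 i) ^ d); split; first exact: pow_nonzero.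
        by rewrite aj_deg aj_mono subnn /=; ring.
      + exists (a0 n d), (z0 ord0 ^ d); split; first exact: pow_nonzero.
        by rewrite a0_deg a0_mono subn0; ring.
    have [r [Hr1 Hr2]] : exists r, r * s < 0 /\ r ^ 2 < e ^ 2.
      case: (Rlt_dec 0 s) => Hs0.
      + exists (- (e / 2)); split; nra.
      + exists (e / 2); split; [have : s < 0 by lra | ]; nra.
    pose h := fun a => f a + r * delta a1 a.
    have Hhz : hom_eval d h z0 < 0 by rewrite /h hom_eval_lin -Es E0 E; lra.
    have [y [Hy Hc]] := closure_seq (Hclos _ Sz0).
    have Hcv : Un_cv (fun k => hom_eval d h (y k)) (hom_eval d h z0).
      apply: hom_eval_cv => // a; exact: cv_const.
    have [k Hk] := cv_eventually _ _ 0 Hcv Hhz.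
    have [Kx Eh] := K_of_Kh (Hy k).1 (Hy k).2.
    have := Hi h; rewrite /h dist2_delta => /(_ Hr2) /(_ _ Kx).
    move: Hk; rewrite Eh; have := pow_lt _ d (Hy k).2.
    move: (peval _ _) (y k ord0 ^ d) => u v; nra.
exists mn; do 2!split => //; first by exists z0.
exact: final_part.
Qed.

End Main.
Theorem mainTheorem12 (n m t d : nat) (g : 'I_m -> rpoly n) (p : 'I_t -> rpoly n) :
  (1 <= d)%N ->
  (exists x, Kset g p x) ->
  (compact_set (Kset g p) ->
     forall f : mono n d -> R,
       exists mn, is_min (Kset g p) (peval f) mn /\
         ((mn > 0) <-> interiorR (Pd g p) f) /\
         (mn = 0 <-> boundaryR (Pd g p) f)) /\
  (closed_at_infty g p ->
     forall f : mono n d -> R,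
       exists mn, is_min (Khsphere g p) (hom_eval d f) mn /\
         ((mn > 0) <-> interiorR (Pd g p) f) /\
         (mn = 0 <-> boundaryR (Pd g p) f)).
Proof.
move=> _ Hne; split => H; [exact: part1 | exact: part2].
Qed.
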